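(* Let $p\ge 2$, let $E$ be a Banach space and $f=\sum_{i\in I}d_i$ a finite sum in $E$. Let $(\varepsilon_i)_{i\in I}$ be independent random variables with $P(\varepsilon_i=\pm1)=1/2$, $S=\big(\mathbb E\|\sum_{i\in I}\varepsilon_id_i\|^p\big)^{1/p}$, and $f^{\otimes p}=f\otimes\cdots\otimes f$ ($p$ times). Then $$\Big\|f^{\otimes p}-\sum_{g\colon\{1,\dots,p\}\to I\ \text{injective}}d_{g(1)}\otimes\cdots\otimes d_{g(p)}\Big\|_\wedge\le\sum_{0\le s\le p-2}\binom{p}{s}(p-s)!\,\|f\|^s S^{p-s}.$$
   Context: $\|\cdot\|_\wedge$ is the projective tensor norm on the $p$-fold projective tensor product $E\widehat\otimes\cdots\widehat\otimes E$. *)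

(* Defs.v *)
From mathcomp Require Import all_boot all_order all_algebra.
From mathcomp Require Import all_classical all_reals all_analysis.
Set Implicit Arguments. Unset Strict Implicit. Unset Printing Implicit Defensive.
Import Order.TTheory GRing.Theory Num.Theory.
Import numFieldNormedType.Exports.
Local Open Scope ring_scope.
Local Open Scope classical_set_scope.

(* Elements of the algebraic p-fold tensor product E (x) ... (x) E are
   represented by finite formal sums  sum_k c_k * x_k(0) (x) ... (x) x_k(p-1).
   Two formal sums denote the same tensor iff they agree on every
   p-multilinear form E^p -> R (universal property of the tensor product). *)
Section Tensor.
Context {R : realType} {E : normedModType R} {p : nat}.

Definition tupd (x : 'I_p -> E) (i : 'I_p) (v : E) : 'I_p -> E :=
  fun j => if j == i then v else x j.

Definition multilinear (L : ('I_p -> E) -> R) : Prop :=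
  forall (x : 'I_p -> E) (i : 'I_p) (a : R) (u v : E),
    L (tupd x i (a *: u + v)) = a * L (tupd x i u) + L (tupd x i v).

Definition tensor := seq (R * ('I_p -> E)).

Definition teval (L : ('I_p -> E) -> R) (t : tensor) : R :=
  \sum_(c <- t) c.1 * L c.2.

Definition tequiv (t1 t2 : tensor) : Prop :=
  forall L, multilinear L -> teval L t1 = teval L t2.

Definition tpure (x : 'I_p -> E) : tensor := [:: (1, x)].

Definition tsub (t1 t2 : tensor) : tensor :=
  t1 ++ [seq (- c.1, c.2) | c <- t2].

Definition tcost (t : tensor) : R :=
  \sum_(c <- t) `|c.1| * \prod_(j < p) `|c.2 j|.

Definition projnorm (t : tensor) : R :=
  inf [set tcost v | v in [set v | tequiv t v]].

End Tensor.

(* E || sum_i eps_i d_i ||^p for independent Rademacher signs (eps_i):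
   the joint law is uniform on {-1,1}^I, so the expectation is the average. *)
Definition rademacher_moment {R : realType} {E : normedModType R}
  {I : finType} (d : I -> E) (p : nat) : R :=
  (2 ^+ #|I|)^-1 *
  \sum_(eps : {ffun I -> bool})
     `| \sum_(i : I) ((if eps i then 1 else -1) : R) *: d i | ^+ p.

(* Main.v *)
Require Import Defs.
From mathcomp Require Import all_boot all_order all_algebra all_fingroup.
From mathcomp Require Import all_classical all_reals all_analysis.
From mathcomp Require Import ring lra zify.
Import Order.TTheory GRing.Theory Num.Theory.
Import numFieldNormedType.Exports.
Local Open Scope ring_scope.

Module Helpers.
Set Implicit Arguments. Unset Strict Implicit. Unset Printing Implicit Defensive.

Section Lin.
Context {R : realType} {E : normedModType R} {p : nat} {I : finType}.
Variable L : ('I_p -> E) -> R.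
Hypothesis HL : multilinear L.

Lemma ml_zero x k : L (tupd x k 0) = 0.
Proof.
have := HL x k 1 0 0; rewrite scaler0 addr0 mul1r => H.
apply: (@addrI _ (L (tupd x k 0))); rewrite addr0; by rewrite -H.
Qed.

Lemma ml_sum x k (J : Type) (r : seq J) (a : J -> R) (u : J -> E) :
  L (tupd x k (\sum_(j <- r) a j *: u j)) = \sum_(j <- r) a j * L (tupd x k (u j)).
Proof.
elim: r => [|j r IH]; first by rewrite !big_nil ml_zero.
by rewrite !big_cons HL IH.
Qed.

Variable d : I -> E.
Variable a : 'I_p -> I -> R.
Variable i0 : I.

Definition gupd (g : {ffun 'I_p -> I}) k i : {ffun 'I_p -> I} :=
  [ffun j => if j == k then i else g j].

Lemma swap_sum k i (H : {ffun 'I_p -> I} -> R) :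
  \sum_(g : {ffun 'I_p -> I}) ((g k == i0)%:R * H (gupd g k i)) = \sum_(g : {ffun 'I_p -> I}) ((g k == i)%:R * H g).
Proof.
pose tau g := gupd g k (tperm i0 i (g k)).
have tauK : cancel tau tau.
  move=> g; apply/ffunP => j; rewrite /tau /gupd !ffunE eqxx.
  by case: eqP => [->|//]; rewrite tpermK.
rewrite [RHS](reindex_inj (can_inj tauK)); apply: eq_bigr => g _.
rewrite /tau /gupd ffunE eqxx (canF_eq (tpermK i0 i)) tpermR.
case: eqP => [->|]; last by rewrite !mul0r.
by rewrite tpermL.
Qed.

Definition W n (g : {ffun 'I_p -> I}) :=
  \prod_(k : 'I_p) (if (k < n)%N then a k (g k) else (g k == i0)%:R).

Lemma expand_n n : (n <= p)%N -> forall y : 'I_p -> E,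
  L (fun k => if (k < n)%N then \sum_i a k i *: d i else y k) =
  \sum_(g : {ffun 'I_p -> I}) W n g * L (fun k => if (k < n)%N then d (g k) else y k).
Proof.
elim: n => [|n IH] hn y.
  transitivity (L y).
    by congr L; apply: funext => k; rewrite ltn0.
  transitivity (\sum_(g : {ffun 'I_p -> I}) W 0 g * L y); last first.
    by apply: eq_bigr => g _; congr (_ * L _); apply: funext => k; rewrite ltn0.
  rewrite -big_distrl /=.
  have -> : \sum_(g : {ffun 'I_p -> I}) W 0 g = 1; last by rewrite mul1r.
  rewrite /W (eq_bigr (fun g : {ffun 'I_p -> I} => \prod_(k : 'I_p) (g k == i0)%:R)); last first.
    by move=> g _; apply: eq_bigr => k _.
  rewrite -(bigA_distr_bigA (fun (k : 'I_p) (i : I) => (i == i0)%:R : R)) /=.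
  apply: big1 => k _; rewrite (bigD1 i0) //= eqxx big1 ?addr0 // => j /negbTE -> //.
have ltnp : (n < p)%N by [].
pose kn := Ordinal ltnp.
pose x := fun k : 'I_p => if (k < n)%N then \sum_i a k i *: d i else y k.
have ltS : forall k : 'I_p, k != kn -> (k < n.+1)%N = (k < n)%N.
  move=> k nk; rewrite ltnS leq_eqVlt.
  have -> : (nat_of_ord k == n) = (k == kn) by [].
  by rewrite (negbTE nk).
have -> : (fun k : 'I_p => if (k < n.+1)%N then \sum_i a k i *: d i else y k)
   = tupd x kn (\sum_i a kn i *: d i).
  apply: funext => k; rewrite /tupd /x; case: eqVneq => [->|nk]; first by rewrite ltnSn.
  by rewrite ltS.
rewrite (ml_sum x kn (index_enum I)).
pose Phi g := L (fun k : 'I_p => if (k < n.+1)%N then d (g k) else y k).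
pose W' g := \prod_(k | k != kn) (if (k < n)%N then a k (g k) else (g k == i0)%:R).
have WnE g : W n g = (g kn == i0)%:R * W' g.
  by rewrite /W (bigD1 kn) //= ltnn.
have WSE g : W n.+1 g = a kn (g kn) * W' g.
  rewrite /W (bigD1 kn) //= ltnSn; congr (_ * _); apply: eq_bigr => k nk.
  by rewrite ltS.
have W'upd g i : W' (gupd g kn i) = W' g.
  by apply: eq_bigr => k nk; rewrite /gupd ffunE (negbTE nk).
transitivity (\sum_i \sum_(g : {ffun 'I_p -> I}) ((g kn == i0)%:R * (a kn i * W' (gupd g kn i) * Phi (gupd g kn i)))).
  apply: eq_bigr => i _.
  have -> : tupd x kn (d i) = (fun k => if (k < n)%N then \sum_i a k i *: d i else tupd y kn (d i) k).
    apply: funext => k; rewrite /tupd /x; case: eqVneq => [->|nk] //.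
    by rewrite ltnn.
  rewrite (IH (ltnW hn) (tupd y kn (d i))) big_distrr /=; apply: eq_bigr => g _.
  rewrite WnE W'upd /Phi.
  have -> : (fun k : 'I_p => if (k < n)%N then d (g k) else tupd y kn (d i) k) =
     (fun k : 'I_p => if (k < n.+1)%N then d (gupd g kn i k) else y k).
    apply: funext => k; rewrite /tupd /gupd ffunE; case: eqVneq => [->|nk].
      by rewrite ltnn ltnSn.
    by rewrite ltS.
  by rewrite mulrA mulrCA !mulrA.
under eq_bigr do rewrite (swap_sum kn _ (fun g => a kn _ * W' g * Phi g)).
rewrite exchange_big /=; apply: eq_bigr => g _.
rewrite (bigD1 (g kn)) //= eqxx mul1r big1 ?addr0; first by rewrite WSE.
by move=> j nj; rewrite eq_sym (negbTE nj) mul0r.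
Qed.

Lemma ml_expand : L (fun k => \sum_i a k i *: d i) =
  \sum_(g : {ffun 'I_p -> I}) (\prod_k a k (g k)) * L (fun k => d (g k)).
Proof.
have := expand_n (leqnn p) (fun _ => 0).
have e1 : (fun k : 'I_p => if (k < p)%N then \sum_i a k i *: d i else 0) = fun k => \sum_i a k i *: d i.
  by apply: funext => k; rewrite ltn_ord.
rewrite e1 => ->; apply: eq_bigr => g _; rewrite /W; congr (_ * _).
  by apply: eq_bigr => k _; rewrite ltn_ord.
by congr L; apply: funext => k; rewrite ltn_ord.
Qed.

End Lin.


Definition stab (p : nat) (I : finType) (g : {ffun 'I_p -> I}) (s : {perm 'I_p}) :=
  [forall k, g (s k) == g k].

Lemma sign_sum (R : realType) p (I : finType) (g : {ffun 'I_p -> I}) :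
  \sum_(s : {perm 'I_p}) ((-1) ^+ odd_perm s * (stab g s)%:R : R) = (injectiveb g)%:R.
Proof.
case: (boolP (injectiveb g)) => [/injectiveP ig | /injectivePn [a [b ab gab]]].
  rewrite (bigD1 1%g) //= odd_perm1 expr0 mul1r.
  have -> : stab g 1%g by apply/forallP => k; rewrite perm1.
  rewrite big1 ?addr0 // => s ns.
  case: (boolP (stab g s)) => [/forallP st|]; last by rewrite mulr0.
  suff : s = 1%g by move/eqP: ns.
  by apply/permP => k; rewrite perm1; apply: ig; apply/eqP.
set F := fun s : {perm 'I_p} => ((-1) ^+ odd_perm s * (stab g s)%:R : R).
pose tau := tperm a b.
have gt k : g (tau k) = g k.
  by rewrite /tau; case: tpermP => [->|->|] //.
have stt s : stab g (tau * s) = stab g s.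
  apply/idP/idP => /forallP st; apply/forallP => k.
    by have := st (tau k); rewrite permM tpermK gt.
  by rewrite permM (eqP (st (tau k))) gt.
have H : \sum_s F s = - \sum_s F s.
  rewrite {1}(reindex_inj (mulgI tau)) -sumrN; apply: eq_bigr => s _.
  by rewrite /F odd_permM odd_tperm ab /= signrN mulNr stt.
have -> : \sum_s F s = 0 by lra.
by [].
Qed.

Section Eps.
Context {R : realType} {p : nat} {I : finType}.
Local Notation T := {ffun I -> bool}.
Local Notation ET := {ffun 'I_p -> {ffun I -> bool}}.

Definition sg (b : bool) : R := if b then 1 else -1.
Lemma sgN b : sg (~~ b) = - sg b. Proof. by case: b; rewrite /sg ?opprK. Qed.
Lemma sg_eq x y : sg (x == y) = sg x * sg y.
Proof. by case: x; case: y; rewrite /sg ?mulr1 ?mul1r ?mulrNN ?mulr1. Qed.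

Lemma eps_orth (s : {perm 'I_p}) (g : {ffun 'I_p -> I}) :
  \sum_(e : ET) \prod_k sg (e k (g k) == e (s k) (g k)) = (stab g s)%:R * #|ET|%:R.
Proof.
under eq_bigr do rewrite (eq_bigr _ (fun k _ => sg_eq _ _)) big_split /=.
case: (boolP (stab g s)) => [/forallP st | nst].
  rewrite mul1r -sum1_card [in RHS]natr_sum; apply: eq_bigr => e _.
  have -> : \prod_k sg (e (s k) (g k)) = \prod_k sg (e k (g k)).
    rewrite [RHS](reindex_inj (@perm_inj _ s)); apply: eq_bigr => k _.
    by rewrite (eqP (st k)).
  rewrite -big_split /=; apply: big1 => k _; rewrite /sg; case: (e k (g k)).
    by rewrite mulr1.
  by rewrite mulrNN mulr1.
rewrite mul0r; move/forallPn: nst => [k0 /eqP ne].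
pose j := s k0; pose i := g k0.
pose flip (e : ET) : ET := [ffun k => if k == j then [ffun i' => if i' == i then ~~ e k i' else e k i'] else e k].
have flipK : cancel flip flip.
  move=> e; apply/ffunP => k; rewrite !ffunE; case: eqP => // ->.
  apply/ffunP => i'; rewrite !ffunE ?eqxx; case: eqP => // _; by rewrite negbK.
pose F (e : ET) := \prod_k sg (e k (g k)) * \prod_k sg (e (s k) (g k)).
have H : \sum_(e : ET) F e = - \sum_(e : ET) F e.
  rewrite {1}(reindex_inj (can_inj flipK)) -sumrN; apply: eq_bigr => e _.
  rewrite /F -mulrN; congr (_ * _).
    apply: eq_bigr => k _; rewrite /flip ffunE; case: eqP => // ->.
    rewrite ffunE; case: eqP => // /esym gi; exfalso; exact: ne.
  rewrite (bigD1 k0) //= [in RHS](bigD1 k0) //= -mulNr; congr (_ * _).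
    by rewrite /flip ffunE -/j eqxx ffunE -/i eqxx sgN.
  apply: eq_bigr => k nk; rewrite /flip ffunE.
  by rewrite (inj_eq (@perm_inj _ s)) (negbTE nk).
change (\sum_(e : ET) F e = 0); lra.
Qed.
End Eps.

Section Moment.
Context {R : realType} {E : normedModType R} {p : nat} {I : finType}.
Local Notation T := {ffun I -> bool}.
Local Notation ET := {ffun 'I_p -> {ffun I -> bool}}.

Lemma sum_coord (U : finType) (k : 'I_p) (G : U -> R) :
  \sum_(e : {ffun 'I_p -> U}) G (e k) = (\sum_c G c) * (#|U|%:R ^+ p.-1).
Proof.
rewrite (eq_bigr (fun e : {ffun 'I_p -> U} => \prod_j (if j == k then G (e j) else 1))); last first.
  by move=> e _; rewrite (bigD1 k) //= eqxx big1 ?mulr1 // => j /negbTE ->.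
rewrite -(bigA_distr_bigA (fun j c => if j == k then G c else 1)) /=.
rewrite (bigD1 k) //= eqxx; congr (_ * _).
rewrite (eq_bigr (fun _ => #|U|%:R)); last first.
  by move=> j /negbTE ->; rewrite sumr_const.
by rewrite prodr_const cardC1 card_ord.
Qed.

Lemma card_ET (U : finType) : (#|{ffun 'I_p -> U}|%:R : R) = #|U|%:R ^+ p.
Proof. by rewrite card_ffun card_ord natrX. Qed.

Lemma moment_eq (d : I -> E) (s : {perm 'I_p}) (k : 'I_p) : s k != k ->
  \sum_(e : ET) `|\sum_i sg (e k i == e (s k) i) *: d i| ^+ p = #|ET|%:R * rademacher_moment d p.
Proof.
move=> nk.
have p0 : (0 < p)%N by case: (p) k {nk s} => [[]|].
pose G (c : T) := `|\sum_i sg (c i) *: d i| ^+ p.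
pose psi (e : ET) : ET := [ffun k' => if k' == k then [ffun i => e k i == e (s k) i] else e k'].
have psiK : cancel psi psi.
  move=> e; apply/ffunP => k'; rewrite !ffunE; case: eqP => // ->.
  apply/ffunP => i; rewrite !ffunE eqxx (negbTE nk).
  by rewrite ffunE; case: (e k i); case: (e (s k) i).
transitivity (\sum_(e : ET) G (psi e k)).
  by apply: eq_bigr => e _; rewrite /G ffunE eqxx; congr (`|_| ^+ _); apply: eq_bigr => i _; rewrite ffunE.
rewrite (reindex_inj (can_inj psiK)) /=; under eq_bigr do rewrite psiK. rewrite sum_coord.
rewrite card_ET /rademacher_moment card_ffun card_bool natrX.
have -> : \sum_c G c = \sum_(eps : {ffun I -> bool}) `| \sum_(i : I) ((if eps i then 1 else -1) : R) *: d i | ^+ p by [].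
have -> : ((2 : R) ^+ #|I| ^+ p) = 2 ^+ #|I| ^+ p.-1 * 2 ^+ #|I| by rewrite -exprSr prednK.
have h2 : ((2 : R) ^+ #|I|) != 0 by rewrite expf_neq0 // pnatr_eq0.
by field.
Qed.
End Moment.


Definition fixs p (s : {perm 'I_p}) := [set k | s k == k].

Lemma nonfix_exists p (s : {perm 'I_p}) : s != 1%g -> exists k, s k != k.
Proof.
move=> ns; case: (boolP [exists k, s k != k]) => [/existsP [k hk]|/existsPn al]; first by exists k.
suff : s = 1%g by move/eqP: ns.
by apply/permP => k; rewrite perm1; apply/eqP; have := al k; rewrite negbK.
Qed.

Lemma fix_lt p (s : {perm 'I_p}) : s != 1%g -> (#|fixs s| < p.-1)%N.
Proof.
move=> /nonfix_exists [k hk].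
have sub : [set k; s k] \subset ~: fixs s.
  apply/fintype.subsetP => x; rewrite !inE => /orP [] /eqP ->; first by [].
  by rewrite (inj_eq (@perm_inj _ s)).
have := subset_leq_card sub; rewrite cards2 eq_sym hk.
have := cardsC (fixs s); rewrite card_ord.
move: (#|fixs s|) (#|~: fixs s|) => a b /= e h.
lia.
Qed.

Lemma count_fix p j : (\sum_(s : {perm 'I_p}) (#|fixs s| == j : nat) <= 'C(p, j) * (p - j)`!)%N.
Proof.
apply: (@leq_trans (\sum_(s : {perm 'I_p}) \sum_(A : {set 'I_p} | #|A| == j) (perm_on (~: A) s : nat))).
  apply: leq_sum => s _; case: eqP => // hs.
  rewrite (bigD1 (fixs s)) /=; last by rewrite hs.
  have -> : perm_on (~: fixs s) s.
    by apply/fintype.subsetP => x; rewrite !inE.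
  by apply: leq_addr.
rewrite exchange_big /=.
rewrite (eq_bigr (fun A => (p - j)`!)); last first.
  move=> A /eqP hA.
  rewrite (eq_bigr (fun s => if perm_on (~: A) s then 1 else 0)%N) //.
  rewrite -big_mkcond /= sum1_card card_perm.
  have := cardsC A; rewrite card_ord hA; move: (#|~: A|) => b e.
  by congr (_`!); lia.
by rewrite sum_nat_cond_const card_draws card_ord.
Qed.

Lemma count_perm (R : realType) p (h : nat -> R) : (2 <= p)%N -> (forall s, 0 <= h s) ->
  \sum_(s : {perm 'I_p} | s != 1%g) h #|fixs s| <=
  \sum_(j < p.-1) ('C(p, j)%:R * (p - j)`!%:R * h j).
Proof.
move=> hp h0.
rewrite (eq_bigr (fun s => \sum_(j < p.-1) ((#|fixs s| == j)%:R * h j))); last first.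
  move=> s ns.
  rewrite (bigD1 (Ordinal (fix_lt ns))) //= eqxx mul1r big1 ?addr0 // => j nj.
  apply/esym.
  have -> : (#|fixs s| == j) = false.
    by apply/negbTE; apply: contra nj => /eqP e; apply/eqP/val_inj.
  by rewrite mul0r.
rewrite exchange_big /=; apply: ler_sum => j _.
rewrite -big_distrl /= -natrM; apply: ler_wpM2r => //.
apply: (@le_trans _ _ (\sum_(s : {perm 'I_p}) (#|fixs s| == j : nat))%:R).
  rewrite natr_sum [in X in _ <= X](bigID (fun s => s != 1%g)) /= lerDl.
  by apply: sumr_ge0 => s _; rewrite ler0n.
by rewrite ler_nat count_fix.
Qed.


Section Main.
Context (R : realType) (E : normedModType R) (I : finType) (d : I -> E) (p : nat).
Hypothesis hp : (2 <= p)%N.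
Local Notation ET := {ffun 'I_p -> {ffun I -> bool}}.
Let f := \sum_i d i.
Let M := rademacher_moment d p.
Let S := powR M (p%:R^-1).
Let N : R := #|ET|%:R.

Definition xv (s : {perm 'I_p}) (e : ET) : 'I_p -> E :=
  fun k => \sum_i (sg (e k i == e (s k) i) : R) *: d i.

Lemma M_ge0 : 0 <= M.
Proof.
rewrite /M /rademacher_moment mulr_ge0 ?invr_ge0 ?exprn_ge0 ?ler0n //.
by apply: sumr_ge0 => c _; rewrite exprn_ge0.
Qed.

Lemma S_ge0 : 0 <= S. Proof. exact: powR_ge0. Qed.

Lemma S_exp : S ^+ p = M.
Proof.
have p0 : (p%:R : R) != 0 by rewrite pnatr_eq0; case: (p) hp.
rewrite /S -powR_mulrn ?powR_ge0 // -powRrM mulVf // powRr1 //; exact: M_ge0.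
Qed.

Lemma N_gt0 : 0 < N.
Proof. by rewrite /N ltr0n card_ffun expn_gt0 card_ffun card_bool expn_gt0. Qed.

Lemma xv_fix (s : {perm 'I_p}) (e : ET) (k : 'I_p) : s k == k -> xv s e k = f.
Proof.
move=> /eqP sk; rewrite /xv /f sk; apply: eq_bigr => i _; by rewrite eqxx /sg scale1r.
Qed.

Lemma per_sigma (s : {perm 'I_p}) : s != 1%g ->
  N^-1 * \sum_(e : ET) \prod_k `|xv s e k| <= `|f| ^+ #|fixs s| * S ^+ (p - #|fixs s|).
Proof.
move=> ns.
set F := fixs s.
pose Q (e : ET) := \prod_(k | k \notin F) `|xv s e k|.
have Q0 e : 0 <= Q e by apply: prodr_ge0 => k _.
have split e : \prod_k `|xv s e k| = `|f| ^+ #|F| * Q e.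
  rewrite (bigID (fun k => k \in F)) /=; congr (_ * _).
  rewrite (eq_bigr (fun _ => `|f|)); first by rewrite prodr_const.
  by move=> k; rewrite inE => /xv_fix ->.
under eq_bigr do rewrite split.
rewrite -big_distrr /= mulrCA; apply: ler_wpM2l; first by rewrite exprn_ge0.
suff : \sum_e Q e <= N * S ^+ (p - #|F|).
  by move=> h; rewrite ler_pdivrMl ?N_gt0.
have sF : (#|F| <= p)%N by have := max_card (mem F); rewrite card_ord.
pose y (e : ET) (k : 'I_p) := if k \in F then S else `|xv s e k|.
have y0 e k : 0 <= y e k by rewrite /y; case: ifP => _; [exact: S_ge0|].
have amgm e : S ^+ #|F| * Q e <= (\sum_k y e k ^+ p) / p%:R.
  have p0 : (0 < p)%N by case: (p) hp.
  have -> : S ^+ #|F| * Q e = \prod_k y e k.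
    rewrite (bigID (fun k => k \in F)) /=; congr (_ * _).
      by rewrite (eq_bigr (fun _ => S)) ?prodr_const // => k hk; rewrite /y hk.
    by apply: eq_bigr => k /negbTE hk; rewrite /y hk.
  rewrite -(ler_pXn2r p0) ?nnegrE ?prodr_ge0 ?divr_ge0 ?sumr_ge0 ?ler0n //; last first.
    by move=> k _; rewrite exprn_ge0.
  rewrite -prodrXl.
  have H := (leif_AGM (A := [pred k : 'I_p | true]) (E := fun k => y e k ^+ p) (fun k _ => exprn_ge0 p (y0 e k))).
  move: H; rewrite /= (_ : #|[pred k : 'I_p | true]| = p); last by rewrite -[RHS]card_ord; apply: eq_card.
  by move=> /leif_le H; exact: H.
have tot : \sum_e \sum_k y e k ^+ p = p%:R * (N * S ^+ p).
  have -> : p%:R * (N * S ^+ p) = \sum_(k : 'I_p) (N * S ^+ p) by rewrite sumr_const card_ord mulr_natl.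
  rewrite exchange_big /=; apply: eq_bigr => k _.
  case: (boolP (k \in F)) => hk.
    rewrite /y hk sumr_const /N mulr_natl; congr (_ *+ _); exact: eq_card.
  rewrite /y (negbTE hk) S_exp moment_eq //.
  by move: hk; rewrite inE.
have key : S ^+ #|F| * \sum_e Q e <= S ^+ #|F| * (N * S ^+ (p - #|F|)).
  rewrite big_distrr /=.
  apply: (@le_trans _ _ (\sum_(e : ET) (\sum_k y e k ^+ p) / p%:R)).
    by apply: ler_sum => e _; exact: amgm.
  have pn0 : (p%:R : R) != 0 by rewrite pnatr_eq0; case: (p) hp.
  rewrite -big_distrl /= tot.
  have -> : p%:R * (N * S ^+ p) / p%:R = N * S ^+ p by field.
  by rewrite mulrCA -exprD subnKC.
have [S0|Spos] := eqVneq S 0; last first.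
  by rewrite -(ler_pM2l (x := S ^+ #|F|)) // exprn_gt0 // lt0r Spos S_ge0.
have M0 : M = 0 by rewrite -S_exp S0 expr0n; case: (p) hp.
have G0 (c : {ffun I -> bool}) : `|\sum_i (sg (c i) : R) *: d i| = 0.
  move: M0; rewrite /M /rademacher_moment => /eqP; rewrite mulf_eq0 invr_eq0 expf_eq0 pnatr_eq0 andbF /=.
  move=> /eqP hs.
  have := psumr_eq0P (fun c _ => exprn_ge0 _ (normr_ge0 _)) hs (i := c) isT.
  by move/eqP; rewrite expf_eq0 => /andP [_ /eqP].
have [k hk] := nonfix_exists ns.
rewrite big1; first by apply: mulr_ge0; [exact: ltW N_gt0 | exact: exprn_ge0 S_ge0].
move=> e _; rewrite /Q (bigD1 k) /=; last by rewrite inE.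
have -> : `|xv s e k| = 0.
  have := G0 [ffun i => e k i == e (s k) i]; rewrite /xv.
  by under eq_bigr do rewrite ffunE.
by rewrite mul0r.
Qed.

Definition vrep : @tensor R E p :=
  [seq (- ((-1) ^+ odd_perm s) / N, xv s e) | s <- [seq s <- index_enum {perm 'I_p} | s != 1%g], e <- index_enum ET].

Definition trep : @tensor R E p :=
  tsub (tpure (fun _ : 'I_p => f))
    [seq (1, (fun j : 'I_p => d (g j))) | g : {ffun 'I_p -> I} <- enum [pred g : {ffun 'I_p -> I} | injectiveb g]].

Definition target (L : ('I_p -> E) -> R) :=
  - \sum_(g : {ffun 'I_p -> I}) \sum_(s : {perm 'I_p} | s != 1%g)
      ((-1) ^+ odd_perm s * (stab g s)%:R) * L (fun k => d (g k)).

Lemma teval_t (i0 : I) L : multilinear L -> teval L trep = target L.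
Proof.
move=> HL.
rewrite /teval /trep /tsub /tpure /= big_cons /= !big_map big_enum /= mul1r.
have -> : L (fun _ => f) = \sum_(g : {ffun 'I_p -> I}) L (fun k => d (g k)).
  have e : (fun _ : 'I_p => f) = (fun k : 'I_p => \sum_i (fun (_ : 'I_p) (_ : I) => (1:R)) k i *: d i).
    by apply: funext => k; rewrite /f; apply: eq_bigr => i _; rewrite scale1r.
  rewrite e (ml_expand HL _ _ i0); apply: eq_bigr => g _.
  by rewrite big1 ?mul1r.
rewrite [X in _ + X]big_mkcond /= -big_split /= /target -sumrN; apply: eq_bigr => g _.
rewrite -big_distrl /= -mulNr.
have := sign_sum R g; rewrite (bigD1 1%g) //= odd_perm1 expr0 mul1r.
have -> : stab g 1%g by apply/forallP => k; rewrite perm1.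
move=> hs.
have -> : - \sum_(s : {perm 'I_p} | s != 1%g) ((-1) ^+ odd_perm s * (stab g s)%:R : R) = 1 - (injectiveb g)%:R.
  by move: hs => /=; rewrite mulr1n; lra.
rewrite inE /=; case: (injectiveb g) => /=.
  by rewrite subrr mul0r mulN1r subrr.
by rewrite subr0 mul1r addr0.
Show.
Qed.

Lemma teval_v (i0 : I) L : multilinear L -> teval L vrep = target L.
Proof.
move=> HL.
rewrite /teval /vrep big_allpairs_dep /= big_filter /target [in RHS]exchange_big /= -sumrN.
apply: eq_bigr => s ns.
have ex e : L (xv s e) = \sum_(g : {ffun 'I_p -> I}) (\prod_k sg (e k (g k) == e (s k) (g k))) * L (fun k => d (g k)).
  exact: (ml_expand HL d (fun k i => sg (e k i == e (s k) i)) i0).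
under eq_bigr => e _ do rewrite ex big_distrr /=.
rewrite exchange_big /= -sumrN; apply: eq_bigr => g _.
under eq_bigr => e _ do rewrite mulrCA.
rewrite -big_distrl /= eps_orth.
have Nn0 : N != 0 by rewrite gt_eqF ?N_gt0.
have eN : (#|ET|%:R : R) = N by [].
rewrite eN; move: (stab g s)%:R ((-1) ^+ odd_perm s : R) (L (fun k => d (g k))) => a b c.
by field.
Qed.

Lemma cost_v : tcost vrep <= \sum_(j < p.-1) ('C(p, j)%:R * (p - j)`!%:R * `|f| ^+ j * S ^+ (p - j)).
Proof.
rewrite /tcost /vrep big_allpairs_dep /= big_filter.
apply: (@le_trans _ _ (\sum_(s : {perm 'I_p} | s != 1%g) `|f| ^+ #|fixs s| * S ^+ (p - #|fixs s|))).
  apply: ler_sum => s ns.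
  apply: le_trans (per_sigma ns); rewrite big_distrr /=; apply: ler_sum => e _.
  rewrite /= normrM normrN normr_sign mul1r normfV ger0_norm ?lexx //; exact: ltW N_gt0.
under [X in _ <= X]eq_bigr do rewrite -mulrA.
apply: (count_perm (h := fun j => `|f| ^+ j * S ^+ (p - j))) => // j.
by rewrite mulr_ge0 ?exprn_ge0 ?S_ge0.
Qed.
End Main.

Lemma tcost_ge0 (R : realType) (E : normedModType R) p (t : @tensor R E p) : 0 <= tcost t.
Proof.
by apply: sumr_ge0 => c _; apply: mulr_ge0 => //; apply: prodr_ge0.
Qed.

Lemma projnorm_le (R : realType) (E : normedModType R) p (t v : @tensor R E p) :
  tequiv t v -> projnorm t <= tcost v.
Proof.
move=> tv; apply: ge_inf; last by exists v.
by exists 0 => y [w _ <-]; exact: tcost_ge0.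
Qed.

End Helpers.
Import Helpers.


Theorem corollary5p2 (R : realType) (E : completeNormedModType R)
  (I : finType) (d : I -> E) (p : nat) (hp : (2 <= p)%N) :
  let f := \sum_(i : I) d i in
  let S := powR (rademacher_moment d p) (p%:R^-1) in
  projnorm (tsub (tpure (fun _ : 'I_p => f))
                 [seq (1, (fun j : 'I_p => d (g j))) | g : {ffun 'I_p -> I} <- enum [pred g : {ffun 'I_p -> I} | injectiveb g]])
  <= \sum_(s < p.-1) ('C(p, s)%:R * (p - s)`!%:R * `|f| ^+ s * S ^+ (p - s)).
Proof.
cbv zeta.
case: (pickP (fun _ : I => true)) => [i0 _ | hI].
  apply: (le_trans (projnorm_le (v := vrep d p) _)); last by have H := cost_v d hp; exact H.
  by move=> L HL; rewrite (teval_t d i0 HL) (teval_v d i0 HL).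
apply: (le_trans (projnorm_le (v := trep d p) _)); first by [].
have I0 : #|I| = 0%N by apply: eq_card0.
have f0 : \sum_(i : I) d i = 0 by rewrite big_pred0.
apply: (@le_trans _ _ 0).
  rewrite /tcost /trep /tsub /tpure /= big_cons /= !big_map big_enum /= [X in _ + X]big_pred0; last first.
    by move=> g; have := hI (g (Ordinal (ltnW hp))).
  by rewrite addr0 f0 normr1 mul1r (bigD1 (Ordinal (ltnW hp))) //= normr0 mul0r.
apply: sumr_ge0 => j _; apply: mulr_ge0; first by rewrite mulr_ge0 ?exprn_ge0.
by rewrite exprn_ge0 // powR_ge0.
Qed.
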